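(* Let $Q$ be a Moufang loop with trivial nucleus. Then the assignment $\sigma(L_x)=R_x$, $\sigma(L_x^{-1})=R_x^{-1}$, $\sigma(R_x)=M_x^{-1}$, $\sigma(R_x^{-1})=M_x$ (for $x\in Q$, where $M_x=R_xL_x$) defines a well-defined mapping $\sigma:\{L_x,R_x,L_x^{-1},R_x^{-1}:x\in Q\}\to\mathrm{Mlt}(Q)$.
   Context: A loop is a magma with identity $1$ in which the left translations $L_x(y)=xy$ and right translations $R_x(y)=yx$ are bijections; it is Moufang if it satisfies $xy\cdot zx=(x\cdot yz)x$. $\mathrm{Mlt}(Q)$ is the permutation group generated by all $L_x,R_x$. The nucleus is the set of $x$ with $x(yz)=(xy)z$, $y(xz)=(yx)z$, $y(zx)=(yz)x$ for all $y,z$. Well-definedness means that whenever two of the listed permutations coincide, their prescribed images coincide. *)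

(* Defs.v *)
From Stdlib Require Import ClassicalEpsilon.

Set Implicit Arguments.

Section Loops.
Variable T : Type.
Variable mul : T -> T -> T.

Definition bij (f : T -> T) : Prop :=
  (forall a b, f a = f b -> a = b) /\ (forall y, exists x, f x = y).

Definition Lt (x : T) : T -> T := fun y => mul x y.
Definition Rt (x : T) : T -> T := fun y => mul y x.
(* M_x = R_x L_x, i.e. y |-> (x y) x  (composition of maps; in a Moufang
   loop this equals x (y x), so the composition convention is immaterial) *)
Definition Mt (x : T) : T -> T := fun y => Rt x (Lt x y).

(* inverse of a map, chosen by epsilon; for a bijection it is the
   two-sided inverse *)
Definition inv_fun (f : T -> T) : T -> T :=
  fun y => epsilon (inhabits y) (fun x => f x = y).

Definition is_loop (e : T) : Prop :=
  (forall x, mul e x = x) /\ (forall x, mul x e = x) /\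
  (forall x, bij (Lt x)) /\ (forall x, bij (Rt x)).

Definition moufang : Prop :=
  forall x y z, mul (mul x y) (mul z x) = mul (mul x (mul y z)) x.

Definition in_nucleus (x : T) : Prop :=
  forall y z, mul x (mul y z) = mul (mul x y) z /\
              mul y (mul x z) = mul (mul y x) z /\
              mul y (mul z x) = mul (mul y z) x.

Definition trivial_nucleus (e : T) : Prop :=
  forall x, in_nucleus x -> x = e.

(* Mlt(Q): the permutation group generated by all L_x, R_x
   (smallest set of maps containing them, closed under composition
   and inverses; it contains id = L_e). *)
Inductive Mlt : (T -> T) -> Prop :=
| Mlt_L x : Mlt (Lt x)
| Mlt_R x : Mlt (Rt x)
| Mlt_comp f g : Mlt f -> Mlt g -> Mlt (fun y => f (g y))
| Mlt_inv f : Mlt f -> Mlt (inv_fun f).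

Inductive tlabel := TL (x : T) | TR (x : T) | TLi (x : T) | TRi (x : T).

Definition perm_of (d : tlabel) : T -> T :=
  match d with
  | TL x => Lt x
  | TR x => Rt x
  | TLi x => inv_fun (Lt x)
  | TRi x => inv_fun (Rt x)
  end.

Definition sigma_img (d : tlabel) : T -> T :=
  match d with
  | TL x => Rt x
  | TLi x => inv_fun (Rt x)
  | TR x => inv_fun (Mt x)
  | TRi x => Mt x
  end.

Definition sigma_well_defined : Prop :=
  (forall d1 d2 : tlabel, (forall y, perm_of d1 y = perm_of d2 y) ->
                          (forall y, sigma_img d1 y = sigma_img d2 y)) /\
  (forall d : tlabel, Mlt (sigma_img d)).

End Loops.

(* Main.v *)
Require Import Defs.
From Stdlib Require Import ClassicalEpsilon.
Set Implicit Arguments.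

Section Proof.
Variable T : Type.
Variable mul : T -> T -> T.
Variable e : T.
Hypothesis Hloop : is_loop mul e.
Hypothesis Hmouf : moufang mul.
Hypothesis Hnuc : trivial_nucleus mul e.

Local Notation "x ** y" := (mul x y) (at level 40, left associativity).

Lemma inv_spec (f : T -> T) : bij f -> forall y, f (inv_fun f y) = y.
Proof.
  intros [_ Hs] y. unfold inv_fun. destruct (Hs y) as [x Hx].
  apply (epsilon_spec (inhabits y) (fun x => f x = y)). exists x; exact Hx.
Qed.

Lemma inv_eq (f g : T -> T) : bij f -> (forall y, f (g y) = y) -> forall y, inv_fun f y = g y.
Proof.
  intros Hb Hg y. pose proof (inv_spec Hb y) as H1. destruct Hb as [Hi _].
  apply Hi. rewrite H1, Hg. reflexivity.
Qed.

Lemma l1 x : e ** x = x. Proof. apply Hloop. Qed.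
Lemma r1 x : x ** e = x. Proof. apply Hloop. Qed.
Lemma Linj x a b : x ** a = x ** b -> a = b.
Proof. destruct Hloop as (_&_&H&_). apply (proj1 (H x)). Qed.
Lemma Rinj x a b : a ** x = b ** x -> a = b.
Proof. destruct Hloop as (_&_&_&H). apply (proj1 (H x)). Qed.
Lemma bijL x : bij (Lt mul x). Proof. apply Hloop. Qed.
Lemma bijR x : bij (Rt mul x). Proof. apply Hloop. Qed.

Lemma flex x z : x ** (z ** x) = (x ** z) ** x.
Proof. pose proof (Hmouf x e z) as H. rewrite r1, l1 in H. exact H. Qed.

Definition iv x := inv_fun (Lt mul x) e.
Lemma iv_r x : x ** iv x = e.
Proof. exact (inv_spec (bijL x) e). Qed.
Lemma LIP1 x z : x ** (iv x ** z) = z.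
Proof.
  pose proof (Hmouf x (iv x) z) as H. rewrite iv_r, l1 in H.
  symmetry. exact (Rinj H).
Qed.
Lemma iv_l x : iv x ** x = e.
Proof. apply (Linj (x:=x)). rewrite LIP1, r1. reflexivity. Qed.
Lemma RIP1 x y : (y ** iv x) ** x = y.
Proof.
  pose proof (Hmouf x y (iv x)) as H. rewrite iv_l, r1, <- flex in H.
  symmetry. exact (Linj H).
Qed.
Lemma iv_iv x : iv (iv x) = x.
Proof. apply (Linj (x:=iv x)). rewrite iv_r, iv_l. reflexivity. Qed.
Lemma LIP2 x z : iv x ** (x ** z) = z.
Proof. pose proof (LIP1 (iv x) z) as H. rewrite iv_iv in H. exact H. Qed.
Lemma RIP2 x y : (y ** x) ** iv x = y.
Proof. pose proof (RIP1 (iv x) y) as H. rewrite iv_iv in H. exact H. Qed.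
Lemma iv_mul a b : iv (a ** b) = iv b ** iv a.
Proof.
  assert (H : b ** iv (a ** b) = iv a).
  { rewrite <- (LIP2 a b) at 1. apply RIP2. }
  rewrite <- H, LIP2. reflexivity.
Qed.

Lemma lmouf x w z : (x ** (w ** x)) ** z = x ** (w ** (x ** z)).
Proof.
  set (u := x ** z).
  pose proof (Hmouf x (w ** u) (iv u)) as H. rewrite RIP2 in H.
  assert (H2 : x ** (w ** u) = ((x ** w) ** x) ** iv (iv u ** x)).
  { rewrite <- H, RIP2. reflexivity. }
  rewrite H2, iv_mul, iv_iv. unfold u. rewrite LIP2, flex. reflexivity.
Qed.

Lemma rmouf x w z : ((z ** x) ** w) ** x = z ** (x ** (w ** x)).
Proof.
  set (u := z ** x).
  pose proof (Hmouf x (iv u) (u ** w)) as H. rewrite LIP2 in H.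
  assert (H2 : (u ** w) ** x = iv (x ** iv u) ** ((x ** w) ** x)).
  { rewrite <- H, LIP2. reflexivity. }
  rewrite H2, iv_mul, iv_iv. unfold u. rewrite RIP2, flex. reflexivity.
Qed.

Section Central.
Variable c : T.
Hypothesis Hc : forall y, c ** y = y ** c.

Lemma cA y z : (c ** y) ** (c ** z) = c ** (c ** (y ** z)).
Proof.
  pose proof (Hmouf c y z) as H. rewrite <- (Hc z) in H.
  rewrite H, <- Hc. reflexivity.
Qed.

Let n := c ** (c ** c).

Lemma Ln y : n ** y = c ** (c ** (c ** y)).
Proof.
  assert (Hla : forall z, (c ** c) ** z = c ** (c ** z)).
  { intro z. pose proof (lmouf c e z) as H. rewrite !l1 in H. exact H. }
  rewrite <- (LIP1 c y). set (z := iv c ** y). unfold n.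
  rewrite cA, Hla. reflexivity.
Qed.

Lemma Rn w : w ** n = ((w ** c) ** c) ** c.
Proof. unfold n. rewrite rmouf. reflexivity. Qed.

Lemma ncent w : n ** w = w ** n.
Proof.
  rewrite Ln, Rn. rewrite (Hc w). rewrite (Hc (w ** c)).
  rewrite (Hc ((w ** c) ** c)). reflexivity.
Qed.

Lemma n_nuc : in_nucleus mul n.
Proof.
  assert (C1 : forall y z, n ** (y ** z) = (n ** y) ** z).
  { intros y z. rewrite !Ln. rewrite <- (cA y z). rewrite (Hc (c ** y)), lmouf. reflexivity. }
  assert (C3 : forall y z, y ** (z ** n) = (y ** z) ** n).
  { intros y z. rewrite !Rn.
    assert (E : (y ** c) ** (z ** c) = ((y ** z) ** c) ** c).
    { pose proof (Hmouf c y z) as H. rewrite (Hc y) in H. rewrite H.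
      rewrite (Hc (y ** z)). reflexivity. }
    rewrite <- E, (rmouf c (z ** c) y), (Hc ((z ** c) ** c)), (rmouf c c z). reflexivity. }
  intros y z. split; [apply C1|split; [|apply C3]].
  rewrite (ncent z), C3, <- (ncent (y ** z)), C1, (ncent y). reflexivity.
Qed.

Lemma cube y : c ** (c ** (c ** y)) = y.
Proof. rewrite <- Ln. rewrite (Hnuc n_nuc). apply l1. Qed.
End Central.

Lemma bijM x : bij (Mt mul x).
Proof.
  destruct (bijL x) as [Li Ls]. destruct (bijR x) as [Ri Rs]. split.
  - intros a b H. apply Li, Ri, H.
  - intro y. destruct (Rs y) as [u Hu]. destruct (Ls u) as [v Hv].
    exists v. unfold Mt. rewrite Hv. exact Hu.
Qed.

Lemma MM x y : Mt mul x (Mt mul (iv x) y) = y.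
Proof.
  unfold Mt, Rt, Lt. rewrite <- (flex (iv x) y), LIP1, RIP1. reflexivity.
Qed.

Definition nm (d : tlabel T) : bool * T :=
  match d with
  | TL x => (true, x) | TLi x => (true, iv x)
  | TR x => (false, x) | TRi x => (false, iv x) end.

Definition pn (p : bool * T) := if fst p then Lt mul (snd p) else Rt mul (snd p).
Definition sn (p : bool * T) := if fst p then Rt mul (snd p) else Mt mul (iv (snd p)).

Lemma perm_nm d y : perm_of mul d y = pn (nm d) y.
Proof.
  destruct d; simpl; try reflexivity.
  - apply inv_eq. apply bijL. intro z. apply LIP1.
  - apply inv_eq. apply bijR. intro z. apply RIP1.
Qed.

Lemma sig_nm d y : sigma_img mul d y = sn (nm d) y.
Proof.
  destruct d; simpl; try reflexivity.
  - apply inv_eq. apply bijM. intro z. apply MM.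
  - apply inv_eq. apply bijR. intro z. apply RIP1.
  - unfold sn; simpl. rewrite iv_iv. reflexivity.
Qed.

Lemma hard a : (forall y, a ** y = y ** a) -> forall y, y ** a = Mt mul (iv a) y.
Proof.
  intros Ha y. set (c := iv a).
  assert (Hc : forall y, c ** y = y ** c).
  { intro z. apply (Linj (x:=a)). unfold c. rewrite LIP1, Ha, RIP1. reflexivity. }
  unfold Mt, Rt, Lt. rewrite <- (Hc (c ** y)).
  apply (Linj (x:=c)). rewrite cube by exact Hc.
  rewrite Hc. unfold c. apply RIP2.
Qed.

Lemma wd p q : (forall y, pn p y = pn q y) -> forall y, sn p y = sn q y.
Proof.
  destruct p as [[|] a], q as [[|] b]; unfold pn, sn; simpl; unfold Lt, Rt; intro H.
  - assert (a = b) by (specialize (H e); rewrite !r1 in H; exact H). subst; reflexivity.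
  - assert (E : a = b) by (specialize (H e); rewrite r1, l1 in H; exact H). subst b.
    apply hard. exact H.
  - assert (E : a = b) by (specialize (H e); rewrite r1, l1 in H; exact H). subst b.
    intro y. symmetry. apply hard. intro z. symmetry. apply H.
  - assert (a = b) by (specialize (H e); rewrite !l1 in H; exact H). subst; reflexivity.
Qed.

End Proof.

Theorem corollary6p2 (T : Type) (mul : T -> T -> T) (e : T)
  (Hloop : is_loop mul e) (Hmouf : moufang mul)
  (Hnuc : trivial_nucleus mul e) :
  sigma_well_defined mul.
Proof.
  split.
  - intros d1 d2 H y. rewrite !(sig_nm Hloop Hmouf).
    apply (wd Hloop Hmouf Hnuc). intro z. rewrite <- !(perm_nm Hloop Hmouf). apply H.
  - intros [x|x|x|x]; simpl.
    + apply Mlt_R.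
    + apply Mlt_inv. exact (Mlt_comp (Mlt_R mul x) (Mlt_L mul x)).
    + apply Mlt_inv, Mlt_R.
    + exact (Mlt_comp (Mlt_R mul x) (Mlt_L mul x)).
Qed.
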